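(* Let $p\equiv11\pmod{12}$, $m$ odd, $\Theta\in\mathrm{Aut}(R_k)$ with order dividing $p^s$, and $\beta\in\mathbb{F}_p$ with $\beta^2=3$. Then $x^2+1$, $x^2+\beta x+1$, $x^2-\beta x+1$ are irreducible over $R_k$ and $x^{6p^s}+1=(x^2+1)^{p^s}(x^2+\beta x+1)^{p^s}(x^2-\beta x+1)^{p^s}$. Every skew $\Theta$-negacyclic code $\mathcal C$ of length $6p^s$ over $R_k$ decomposes as $\mathcal C=\mathcal C_1\oplus\mathcal C_2\oplus\mathcal C_3$ with $\mathcal C_1,\mathcal C_2,\mathcal C_3$ left ideals of $R_k[x;\Theta]/\langle(x^2+1)^{p^s}\rangle$, $R_k[x;\Theta]/\langle(x^2+\beta x+1)^{p^s}\rangle$, $R_k[x;\Theta]/\langle(x^2-\beta x+1)^{p^s}\rangle$; $\mathcal C^\perp=\mathcal C_1^\perp\oplus\mathcal C_2^\perp\oplus\mathcal C_3^\perp$ with $\mathcal C_1^\perp,\mathcal C_2^\perp,\mathcal C_3^\perp$ left ideals of $R_k[x;\Theta]/\langle(x^2+1)^{p^s}\rangle$, $R_k[x;\Theta]/\langle(x^2-\beta x+1)^{p^s}\rangle$, $R_k[x;\Theta]/\langle(x^2+\beta x+1)^{p^s}\rangle$; and $\mathcal C$ is self-dual iff $\mathcal C_1=\mathcal C_1^\perp$, $\mathcal C_2=\mathcal C_3^\perp$, $\mathcal C_3=\mathcal C_2^\perp$.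
   Context: $R_k=\mathbb{F}_{p^m}[u]/\langle u^k\rangle$; $R_k[x;\Theta]$ is the skew polynomial ring with $xa=\Theta(a)x$. A skew $\Theta$-negacyclic code of length $N$ is a left ideal of $R_k[x;\Theta]/\langle x^N+1\rangle$; decompositions are via the Chinese Remainder isomorphism for the stated factorization. $\mathcal C^\perp$ is the Euclidean dual and $\mathcal C_i^\perp$ its component in the indicated factor ring. *)

(* Defs.v *)
From HB Require Import structures.
From mathcomp Require Import all_boot all_order all_algebra.
Set Implicit Arguments.
Unset Strict Implicit.
Unset Printing Implicit Defensive.
Import GRing.Theory.
Local Open Scope ring_scope.

(* R_k = F_{p^m}[u]/<u^k>, realised as the quotient ring F[u]/<u^k>
   (MathComp's qpoly; for 0 < k the modulus u^k is monic of size > 1). *)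
Notation Rk F k := {poly %/ ('X^k : {poly F})}.

(* Multiplication in the skew polynomial ring R[x; th], where x a = th(a) x:
   (sum f_i x^i)(sum g_j x^j) = sum_n (sum_{i+j=n} f_i th^i(g_j)) x^n.
   Elements of R[x; th] are represented by their coefficient polynomials. *)
Definition skew_mul (R : nzRingType) (th : R -> R) (f g : {poly R}) : {poly R} :=
  \poly_(n < (size f + size g).-1) \sum_(i < n.+1) f`_i * iter i th g`_(n - i).

(* For the moduli used below (coefficients in the prime field, which th fixes,
   and central in R[x;th]) this is the reduction map R[x;th] -> R[x;th]/<g>,
   elements of the quotient being represented by polynomials of size < size g. *)
Definition qmod (R : nzRingType) (c g : {poly R}) : {poly R} := Pdiv.Ring.rmodp c g.

Definition skew_left_ideal (R : nzRingType) (th : R -> R) (g : {poly R})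
    (I : {poly R} -> Prop) : Prop :=
  [/\ forall c, I c -> (size c < size g)%N,
      I 0,
      forall c d, I c -> I d -> I (c + d) &
      forall a c, I c -> I (qmod (skew_mul th a c) g)].

Definition skew_negacyclic (R : nzRingType) (th : R -> R) (N : nat)
    (C : {poly R} -> Prop) : Prop :=
  skew_left_ideal th ('X^N + 1) C.

Definition euclid_dual (R : nzRingType) (N : nat) (C : {poly R} -> Prop) :
    {poly R} -> Prop :=
  fun d => (size d <= N)%N /\ forall c, C c -> \sum_(i < N) c`_i * d`_i = 0.

(* Component of C in the factor ring R[x;th]/<g> under the Chinese Remainder map
   c |-> (c mod g_1, c mod g_2, c mod g_3). *)
Definition crt_comp (R : nzRingType) (g : {poly R}) (C : {poly R} -> Prop) :
    {poly R} -> Prop :=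
  fun r => exists c, C c /\ r = qmod c g.

Definition poly_unit (R : comNzRingType) (f : {poly R}) : Prop :=
  exists g, f * g = 1.

Definition poly_irreducible (R : comNzRingType) (f : {poly R}) : Prop :=
  [/\ f != 0, ~ poly_unit f &
      forall g h, f = g * h -> poly_unit g \/ poly_unit h].

(* Main.v *)
Require Import Defs.
From HB Require Import structures.
From mathcomp Require Import all_boot all_order all_algebra all_field.
From mathcomp Require Import zify ring.
Import GRing.Theory Pdiv.Ring.
Local Open Scope ring_scope.
Set Implicit Arguments. Unset Strict Implicit.

Section Skew.
Variables (R : comNzRingType) (th : {rmorphism R -> R}).

Lemma coef_iter_map i (v : {poly R}) j :
  (iter i (map_poly th) v)`_j = iter i th v`_j.
Proof. by elim: i => [|i IH] //=; rewrite coef_map IH. Qed.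

Lemma iter_th0 i : iter i th 0 = 0.
Proof. by elim: i => [|i IH] //=; rewrite IH rmorph0. Qed.

Lemma sum_widen n1 n2 (T : nat -> R) : (n1 <= n2)%N ->
  (forall i, (n1 <= i)%N -> T i = 0) ->
  \sum_(i < n1) T i = \sum_(i < n2) T i.
Proof.
move=> le h; rewrite (big_ord_widen _ _ le) big_mkcond /=.
by apply: eq_bigr => i _; case: ifP => // /negbT; rewrite -leqNgt => /h ->.
Qed.

Lemma skew_mulE a v : skew_mul th a v =
  \sum_(i < size a) a`_i *: ('X^i * iter i (map_poly th) v).
Proof.
apply/polyP => n; rewrite coef_poly coef_sum.
under [RHS]eq_bigr => i _ do rewrite coefZ coefXnM coef_iter_map.
case: ltnP => hn.
  pose T i := if (i <= n)%N then a`_i * iter i th v`_(n - i) else 0.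
  have -> : \sum_(i < n.+1) a`_i * iter i th v`_(n - i) = \sum_(i < n.+1) T i.
    by apply: eq_bigr => i _; rewrite /T -ltnS ltn_ord.
  have -> : \sum_(i < size a) a`_i * (if (n < i)%N then 0 else iter i th v`_(n - i))
     = \sum_(i < size a) T i.
    apply: eq_bigr => i _; rewrite /T; by case: (leqP i n) => h; rewrite ?mulr0.
  rewrite (@sum_widen n.+1 (maxn n.+1 (size a))) ?leq_maxl //; last first.
    by move=> i hi; rewrite /T leqNgt hi.
  rewrite [RHS](@sum_widen (size a) (maxn n.+1 (size a))) ?leq_maxr //.
  by move=> i hi; rewrite /T nth_default // mul0r if_same.
symmetry; apply: big1 => i _; case: ltnP; rewrite ?mulr0 // => hin.
have h : (size v <= n - i)%N by have := ltn_ord i; lia.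
by rewrite (nth_default 0 h) iter_th0 mulr0.
Qed.

Lemma iter_mapD i (v w : {poly R}) :
  iter i (map_poly th) (v + w) = iter i (map_poly th) v + iter i (map_poly th) w.
Proof. by elim: i => [|i IH] //=; rewrite IH rmorphD. Qed.

Lemma iter_mapZ i (c : R) (v : {poly R}) :
  iter i (map_poly th) (c *: v) = iter i th c *: iter i (map_poly th) v.
Proof. by elim: i => [|i IH] //=; rewrite IH linearZ /=. Qed.

Lemma iter_mapM i (q g : {poly R}) : map_poly th g = g ->
  iter i (map_poly th) (q * g) = iter i (map_poly th) q * g.
Proof. by move=> hg; elim: i => [|i IH] //=; rewrite IH rmorphM /= hg. Qed.

Lemma skew_mulDr a v w : skew_mul th a (v + w) = skew_mul th a v + skew_mul th a w.
Proof.
rewrite !skew_mulE -big_split /=; apply: eq_bigr => i _.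
by rewrite iter_mapD mulrDr scalerDr.
Qed.

Lemma skew_mul0r a : skew_mul th a 0 = 0.
Proof.
have h := skew_mulDr a 0 0; rewrite addr0 in h.
by apply: (addrI (skew_mul th a 0)); rewrite addr0 -h.
Qed.

Lemma skew_mul_fix a q g : map_poly th g = g ->
  skew_mul th a (q * g) = skew_mul th a q * g.
Proof.
move=> hg; rewrite !skew_mulE mulr_suml; apply: eq_bigr => i _.
by rewrite iter_mapM // mulrA scalerAl.
Qed.

Lemma skew_mulX v : skew_mul th 'X v = 'X * map_poly th v.
Proof.
by rewrite skew_mulE size_polyX !big_ord_recl big_ord0 !coefX /= scale0r add0r scale1r addr0 expr1.
Qed.

Lemma skew_mul_central (e c : {poly R}) :
  (forall i, e`_i != 0 -> iter i (map_poly th) c = c) ->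
  skew_mul th e c = e * c.
Proof.
move=> h; rewrite skew_mulE; have -> : e * c = (\poly_(i < size e) e`_i) * c by rewrite coefK.
rewrite poly_def mulr_suml; apply: eq_bigr => i _.
have [->|/h ->] := eqVneq e`_i 0; first by rewrite !scale0r mul0r.
by rewrite scalerAl.
Qed.
End Skew.

Section Ideal.
Variables (R : comNzRingType) (th : {rmorphism R -> R}).

Lemma rmodp_mulE (G X Y q : {poly R}) : G \is monic -> X = Y + q * G ->
  rmodp X G = rmodp Y G.
Proof.
by move=> mG ->; rewrite (Pdiv.RingMonic.rmodpD mG) (Pdiv.RingMonic.rmodp_mull mG) addr0.
Qed.

Lemma rmodp_eqE (G X Y : {poly R}) : G \is monic -> rmodp X G = rmodp Y G ->
  X = Y + (rdivp X G - rdivp Y G) * G.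
Proof.
move=> mG e; move: (Pdiv.RingMonic.rdivp_eq mG X) (Pdiv.RingMonic.rdivp_eq mG Y).
rewrite e; set qX := rdivp X G; set qY := rdivp Y G; set r := rmodp Y G.
move=> eX eY; rewrite {1}eX {1}eY; ring.
Qed.

Lemma comp_ideal (G g h : {poly R}) (I : {poly R} -> Prop) :
  G = g * h -> g \is monic -> G \is monic -> map_poly th g = g ->
  skew_left_ideal th G I -> skew_left_ideal th g (crt_comp g I).
Proof.
move=> eG mg mG thg [Isz I0 ID IM]; split.
- by move=> _ [c [_ ->]]; rewrite /qmod Pdiv.Ring.ltn_rmodpN0 // monic_neq0.
- by exists 0; split => //; rewrite /qmod Pdiv.Ring.rmod0p.
- move=> _ _ [c [Ic ->]] [d [Id ->]]; exists (c + d); split; first exact: ID.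
  by rewrite /qmod (Pdiv.RingMonic.rmodpD mg).
- move=> a _ [c [Ic ->]]; exists (qmod (skew_mul th a c) G); split; first exact: IM.
  rewrite /qmod.
  have H1 : rmodp (rmodp (skew_mul th a c) G) g = rmodp (skew_mul th a c) g.
    symmetry; apply: (rmodp_mulE (q := rdivp (skew_mul th a c) G * h)) => //.
    rewrite {1}(Pdiv.RingMonic.rdivp_eq mG (skew_mul th a c)).
    set q := rdivp _ G; set r := rmodp _ G; rewrite eG; ring.
  rewrite H1; symmetry; apply: (rmodp_mulE (q := skew_mul th a (rdivp c g))) => //.
  rewrite {1}(Pdiv.RingMonic.rdivp_eq mg c) skew_mulDr skew_mul_fix // addrC; reflexivity.
Qed.
End Ideal.


Section CRT.
Variables (R : comNzRingType) (th : {rmorphism R -> R}).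

Lemma crt_iff (G g1 g2 g3 t1 t2 t3 : {poly R}) (I : {poly R} -> Prop) (c : {poly R}) :
  G = g1 * g2 * g3 -> G \is monic -> g1 \is monic -> g2 \is monic -> g3 \is monic ->
  t1 * (g2 * g3) + t2 * (g1 * g3) + t3 * (g1 * g2) = 1 ->
  (forall v, skew_mul th (t1 * (g2 * g3)) v = t1 * (g2 * g3) * v) ->
  (forall v, skew_mul th (t2 * (g1 * g3)) v = t2 * (g1 * g3) * v) ->
  (forall v, skew_mul th (t3 * (g1 * g2)) v = t3 * (g1 * g2) * v) ->
  skew_left_ideal th G I -> (size c < size G)%N ->
  (I c <-> [/\ crt_comp g1 I (qmod c g1), crt_comp g2 I (qmod c g2)
             & crt_comp g3 I (qmod c g3)]).
Proof.
move=> eG mG m1 m2 m3 hs h1 h2 h3 [Isz I0 ID IM] hc; split.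
  by move=> Ic; split; exists c.
case=> [[c1 [I1 e1]] [c2 [I2 e2]] [c3 [I3 e3]]].
move: (rmodp_eqE m1 (esym e1)) (rmodp_eqE m2 (esym e2)) (rmodp_eqE m3 (esym e3)).
set d1 := (_ - _); set d2 := (_ - _); set d3 := (_ - _) => E1 E2 E3.
have Iw := ID _ _ (ID _ _ (IM (t1 * (g2 * g3)) _ I1) (IM (t2 * (g1 * g3)) _ I2))
                  (IM (t3 * (g1 * g2)) _ I3).
suff <- : qmod (skew_mul th (t1 * (g2 * g3)) c1) G + qmod (skew_mul th (t2 * (g1 * g3)) c2) G
  + qmod (skew_mul th (t3 * (g1 * g2)) c3) G = c by [].
rewrite /qmod h1 h2 h3 -!(Pdiv.RingMonic.rmodpD mG) -[RHS](Pdiv.Ring.rmodp_small hc).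
apply: (rmodp_mulE (q := t1 * d1 + t2 * d2 + t3 * d3)) => //.
rewrite E1 E2 E3 eG.
transitivity (c * (t1 * (g2 * g3) + t2 * (g1 * g3) + t3 * (g1 * g2))
   + (t1 * d1 + t2 * d2 + t3 * d3) * (g1 * g2 * g3)); first ring.
by rewrite hs mulr1.
Qed.
End CRT.

Section Shift.
Variables (R : comNzRingType) (th : {rmorphism R -> R}) (G : {poly R}).
Hypotheses (mG : G \is monic) (thG : map_poly th G = G).

Definition Sh (v : {poly R}) := rmodp ('X * map_poly th v) G.

Lemma rmodp_shift w : rmodp ('X * map_poly th w) G = Sh (rmodp w G).
Proof.
rewrite /Sh; apply: (rmodp_mulE (q := 'X * map_poly th (rdivp w G))) => //.
rewrite {1}(Pdiv.RingMonic.rdivp_eq mG w) rmorphD rmorphM /= thG; ring.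
Qed.

Lemma iter_Sh i v : iter i Sh (rmodp v G) = rmodp ('X^i * iter i (map_poly th) v) G.
Proof.
elim: i => [|i IH]; first by rewrite /= expr0 mul1r.
by rewrite iterS IH -rmodp_shift rmorphM /= map_polyXn exprS mulrA.
Qed.

Lemma qmod_skew (a v : {poly R}) : (size v < size G)%N ->
  qmod (skew_mul th a v) G = \sum_(i < size a) a`_i *: iter i Sh v.
Proof.
move=> hv; rewrite /qmod skew_mulE (Pdiv.RingMonic.rmodp_sum mG); apply: eq_bigr => i _.
by rewrite (Pdiv.RingMonic.rmodpZ mG) -{2}(Pdiv.Ring.rmodp_small hv) iter_Sh.
Qed.

Lemma Sh_ideal (I : {poly R} -> Prop) c : skew_left_ideal th G I -> I c -> I (Sh c).
Proof. by case=> _ _ _ IM /(IM 'X); rewrite /qmod skew_mulX. Qed.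

Lemma iter_Sh_ideal (I : {poly R} -> Prop) i c : skew_left_ideal th G I -> I c -> I (iter i Sh c).
Proof. by move=> hI; elim: i => [|i IH] //= /IH; apply: Sh_ideal. Qed.
End Shift.

Section Dual.
Variables (R : comNzRingType) (th : {rmorphism R -> R}) (N : nat).
Hypothesis N0 : (0 < N)%N.
Let G : {poly R} := 'X^N + 1.
Implicit Types (v c d w : {poly R}).

Lemma G_monic : G \is monic.
Proof. by rewrite /G -polyC1 monicXnaddC. Qed.

Lemma G_size : size G = N.+1.
Proof. by rewrite /G -polyC1 size_XnaddC. Qed.

Lemma G_fix : map_poly th G = G.
Proof. by rewrite /G rmorphD rmorph1 /= map_polyXn. Qed.

Lemma coefG j : G`_j = (j == N)%:R + (j == 0)%:R.
Proof. by rewrite /G coefD coefXn coef1. Qed.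

Lemma coef_Sh v j : (size v <= N)%N -> (j < N)%N ->
  (Sh th G v)`_j = if j == 0 then - th v`_N.-1 else th v`_j.-1.
Proof.
move=> hv hj.
have E : Sh th G v = 'X * map_poly th v - (th v`_N.-1)%:P * G.
  rewrite /Sh; set c := th _.
  set r := (X in _ = X).
  have -> : 'X * map_poly th v = c%:P * G + r by rewrite /r; ring.
  apply: (Pdiv.RingMonic.rmodp_addl_mul_small G_monic).
  rewrite G_size ltnS; apply/leq_sizeP => k hk.
  rewrite coefB coefXM coefCM coefG (gtn_eqF (leq_trans N0 hk)) addr0.
  have [->|hkN] := eqVneq k N.
    by rewrite coef_map /= mulr1 subrr.
  have hk' : (N < k)%N by rewrite ltn_neqAle eq_sym hkN.
  rewrite mulr0 subr0 coef_map /= nth_default ?rmorph0 //.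
  by apply: leq_trans hv _; rewrite -ltnS prednK ?(leq_trans N0 hk).
rewrite E coefB coefXM coefCM coefG (ltn_eqF hj) add0r coef_map /=.
by case: eqP => _; rewrite ?mulr1 ?mulr0 ?sub0r ?subr0.
Qed.

Lemma pair_Sh c d : (size c <= N)%N -> (size d <= N)%N ->
  \sum_(i < N) (Sh th G c)`_i * (Sh th G d)`_i = th (\sum_(i < N) c`_i * d`_i).
Proof.
move=> hc hd; case: N N0 hc hd coef_Sh => // n _ hc hd cS.
rewrite big_ord_recl big_ord_recr /= rmorphD rmorph_sum /= !cS //= addrC mulrNN rmorphM.
congr (_ + _); apply: eq_bigr => i _; rewrite !cS //= ?rmorphM //.
all: try by rewrite ltnS ltn_ord.
Qed.

Lemma iter_Sh_id v : (size v <= N)%N -> (forall x, iter (2 * N) th x = x) ->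
  iter (2 * N) (Sh th G) v = v.
Proof.
move=> hv hth.
have hv' : (size v < size G)%N by rewrite G_size ltnS.
rewrite -{1}(Pdiv.Ring.rmodp_small hv') (iter_Sh G_monic G_fix).
have -> : iter (2 * N) (map_poly th) v = v.
  by apply/polyP => j; rewrite coef_iter_map hth.
rewrite -[RHS](Pdiv.Ring.rmodp_small hv').
apply: (rmodp_mulE (q := ('X^N - 1) * v)); first exact: G_monic.
rewrite mulnC exprM /G; ring.
Qed.

Lemma dual_ideal (C : {poly R} -> Prop) : skew_left_ideal th G C ->
  (forall x, iter (2 * N) th x = x) -> skew_left_ideal th G (euclid_dual N C).
Proof.
move=> hC hth; have [Csz C0 CD CM] := hC.
have D0 : euclid_dual N C 0.
  by split; rewrite ?size_poly0 // => c _; apply: big1 => i _; rewrite coef0 mulr0.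
have DD : forall d e, euclid_dual N C d -> euclid_dual N C e -> euclid_dual N C (d + e).
  move=> d e [hd Hd] [he He]; split.
    by apply: leq_trans (size_polyD _ _) _; rewrite geq_max hd.
  move=> c Cc; transitivity (\sum_(i < N) c`_i * d`_i + \sum_(i < N) c`_i * e`_i);
    last by rewrite Hd // He // addr0.
  rewrite -big_split /=; by apply: eq_bigr => i _; rewrite coefD mulrDr.
have DZ : forall x d, euclid_dual N C d -> euclid_dual N C (x *: d).
  move=> x d [hd Hd]; split; first exact: leq_trans (size_scale_leq _ _) hd.
  move=> c Cc; transitivity (x * \sum_(i < N) c`_i * d`_i);
    last by rewrite Hd // mulr0.
  rewrite mulr_sumr; by apply: eq_bigr => i _; rewrite coefZ mulrCA.
have DS : forall d, euclid_dual N C d -> euclid_dual N C (Sh th G d).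
  move=> d [hd Hd]; split.
    by rewrite -ltnS -G_size Pdiv.Ring.ltn_rmodpN0 // monic_neq0 // G_monic.
  move=> c Cc; set c' := iter (2 * N).-1 (Sh th G) c.
  have Cc' : C c' by apply: iter_Sh_ideal hC Cc.
  have sc' : (size c' <= N)%N by rewrite -ltnS -G_size; apply: Csz.
  have sc : (size c <= N)%N by rewrite -ltnS -G_size; apply: Csz.
  have -> : c = Sh th G c'.
    rewrite /c' -iterS prednK ?muln_gt0 // iter_Sh_id //.
  by rewrite pair_Sh // Hd // rmorph0.
have DI : forall i d, euclid_dual N C d -> euclid_dual N C (iter i (Sh th G) d).
  by move=> i d hd; elim: i => [|i IH] //=; apply: DS.
split.
- by move=> d [hd _]; rewrite G_size ltnS.
- exact: D0.
- exact: DD.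
- move=> a d hd; rewrite qmod_skew ?G_monic ?G_fix //; last by rewrite G_size ltnS; case: hd.
  by apply: (big_ind (euclid_dual N C)) => // i _; apply/DZ/DI.
Qed.
End Dual.
Lemma nil_unit (T : comNzRingType) (a a' m : T) k :
  a * a' = 1 -> m ^+ k = 0 -> exists y, (a + m) * y = 1.
Proof.
move=> ha hm; set x := a' * m.
exists (a' * \sum_(i < k) (- x) ^+ i).
have hx : (- x) ^+ k = 0 by rewrite exprNn /x exprMn hm !mulr0.
have e := subrX1 (- x) k; rewrite hx sub0r in e.
have -> : (a + m) * (a' * \sum_(i < k) (- x) ^+ i)
   = - ((- x - 1) * \sum_(i < k) (- x) ^+ i) + (a * a' - 1) * \sum_(i < k) (- x) ^+ i
   by rewrite /x; ring.
by rewrite -e ha subrr mul0r addr0 opprK.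
Qed.

Section Red.
Variables (F : fieldType) (k : nat).
Hypothesis hk : (0 < k)%N.
Local Notation R := (Rk F k).

Lemma mkX : mk_monic ('X^k : {poly F}) = 'X^k.
Proof. by rewrite mk_monic_Xn prednK. Qed.

Definition piR (r : R) : F := (r : {poly F})`_0.

Lemma rmodpXk0 (q : {poly F}) : (rmodp q 'X^k)`_0 = q`_0.
Proof.
rewrite {2}(Pdiv.RingMonic.rdivp_eq (monicXn _ k) q) coefD coefMXn hk add0r //.
Qed.

Lemma rmodpM0 (q : {poly F}) : (rmodp q (mk_monic ('X^k : {poly F})))`_0 = q`_0.
Proof. by rewrite mkX rmodpXk0. Qed.

Lemma pi_zmod : zmod_morphism piR.
Proof. by move=> x y; rewrite /piR /= coefB. Qed.

Lemma pi_monoid : monoid_morphism piR.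
Proof.
split; first by rewrite /piR qpolyCE coefC.
by move=> x y; rewrite /piR poly_of_qpolyM rmodpM0 coef0M.
Qed.

HB.instance Definition _ := GRing.isZmodMorphism.Build R F piR pi_zmod.
HB.instance Definition _ := GRing.isMonoidMorphism.Build R F piR pi_monoid.

Definition u : R := in_qpoly _ 'X.

Lemma uk : u ^+ k = 0.
Proof.
apply: val_inj; rewrite /u -rmorphXn /= mkX (Pdiv.RingMonic.rmodpp (monicXn _ k)).
by [].
Qed.

Definition rho (r : R) : R := in_qpoly _ (\poly_(i < size (r : {poly F})) (r : {poly F})`_i.+1).

Lemma rho0 : rho 0 = 0.
Proof. by rewrite /rho size_poly0 poly_def big_ord0 in_qpoly0. Qed.

Lemma rhoE r : piR r = 0 -> r = u * rho r.
Proof.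
move=> h0; rewrite /u /rho -rmorphM /=; apply: val_inj => /=.
set q := \poly_(_ < _) _.
have -> : 'X * q = (r : {poly F}).
  apply/polyP => j; rewrite coefXM coef_poly; case: j => [|j] //=.
  case: ltnP => // hj; rewrite nth_default //; exact: leqW.
by rewrite (Pdiv.Ring.rmodp_small (size_mk_monic r)).
Qed.

Lemma pi_nil r : piR r = 0 -> r ^+ k = 0.
Proof. by move=> /rhoE ->; rewrite exprMn uk mul0r. Qed.

Lemma piC c : piR (qpolyC _ c) = c.
Proof. by rewrite /piR qpolyCE coefC. Qed.

Lemma unit_pi (r : R) : piR r != 0 -> exists s, r * s = 1.
Proof.
move=> h; set c := piR r.
have -> : r = qpolyC _ c + (r - qpolyC _ c) by rewrite addrC subrK.
apply: (nil_unit (a' := qpolyC _ c^-1) (k := k)).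
  by rewrite -qpolyCM mulfV.
by apply: pi_nil; rewrite rmorphB /= piC subrr.
Qed.

Lemma poly_unit_pi (g : {poly R}) : piR g`_0 != 0 ->
  (forall i, (0 < i)%N -> piR g`_i = 0) -> Defs.poly_unit g.
Proof.
move=> h0 hi; have [s hs] := unit_pi h0.
set n := g - (g`_0)%:P.
have -> : g = (g`_0)%:P + n by rewrite addrC subrK.
have hn : n = (u%:P) * map_poly rho n.
  apply/polyP => j; rewrite coefCM coef_map_id0 ?rho0 //; apply: rhoE.
  rewrite /n coefB coefC; case: j => [|j] /=; first by rewrite subrr rmorph0.
  by rewrite subr0 hi.
have H1 : (g`_0)%:P * s%:P = 1 by rewrite -polyCM hs.
have H2 : n ^+ k = 0 by rewrite hn exprMn -rmorphXn /= uk polyC0 mul0r.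
have [y hy] := nil_unit H1 H2.
by exists y.
Qed.

Lemma root_size2 (q : {poly F}) : size q = 2 -> exists x, root q x.
Proof.
move=> hs; have q1 : q`_1 != 0.
  by have := lead_coef_eq0 q; rewrite lead_coefE hs /= => ->; rewrite -size_poly_eq0 hs.
exists (- q`_0 / q`_1); apply/rootP.
rewrite horner_coef hs !big_ord_recl big_ord0 /= expr0 expr1 mulr1 addr0.
by field.
Qed.

Lemma unit_size1 (g : {poly R}) : size (map_poly piR g) = 1 -> Defs.poly_unit g.
Proof.
move=> hs; apply: poly_unit_pi.
  rewrite -coef_map; have := lead_coef_eq0 (map_poly piR g); rewrite lead_coefE hs /= => ->.
  by rewrite -size_poly_eq0 hs.
by move=> i hi; rewrite -coef_map nth_default // hs.
Qed.

Lemma irr_pi (f : {poly R}) : f \is monic -> size f = 3 ->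
  (forall x : F, ~~ root (map_poly piR f) x) -> poly_irreducible f.
Proof.
move=> mf sf nr.
have fb3 : size (map_poly piR f) = 3.
  by rewrite size_map_poly_id0 // (monicP mf) rmorph1 oner_neq0.
split; first exact: monic_neq0.
  case=> g hg; have := congr1 (map_poly piR) hg; rewrite rmorphM rmorph1 /= => e.
  have gb0 : map_poly piR g != 0 by apply/eqP => h; rewrite h mulr0 in e; move/eqP: e; rewrite eq_sym oner_eq0.
  have fb0 : map_poly piR f != 0 by rewrite -size_poly_eq0 fb3.
  have := size_mul fb0 gb0; rewrite e size_poly1 fb3.
  by have := size_poly_gt0 (map_poly piR g); rewrite gb0; lia.
move=> g h e; have := congr1 (map_poly piR) e; rewrite rmorphM /= => eb.
have fb0 : map_poly piR f != 0 by rewrite -size_poly_eq0 fb3.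
have gb0 : map_poly piR g != 0 by apply/eqP => h0; rewrite h0 mul0r in eb; rewrite eb eqxx in fb0.
have hb0 : map_poly piR h != 0 by apply/eqP => h0; rewrite h0 mulr0 in eb; rewrite eb eqxx in fb0.
have := size_mul gb0 hb0; rewrite -eb fb3 => es.
have g1 := size_poly_gt0 (map_poly piR g); have h1 := size_poly_gt0 (map_poly piR h).
rewrite gb0 in g1; rewrite hb0 in h1.
have [sg1|sg1] := eqVneq (size (map_poly piR g)) 1%N; first by left; apply: unit_size1.
have [sh1|sh1] := eqVneq (size (map_poly piR h)) 1%N; first by right; apply: unit_size1.
have key : forall a b : nat, 3 = (a + b).-1 -> (0 < a)%N -> (0 < b)%N ->
  a != 1%N -> b != 1%N -> a = 2%N by move=> a b; lia.
have sg2 := key _ _ es g1 h1 sg1 sh1.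
have [x hx] := root_size2 sg2.
by have := nr x; rewrite eb rootM hx.
Qed.
End Red.
Lemma pchar_nat (T : nzRingType) (p s : nat) : p \in [pchar T] -> [pchar T].-nat (p ^ s)%N.
Proof.
move=> hp; rewrite (eq_pnat _ (pcharf_eq hp)) pnatX pnat_id ?orbT //.
exact: pcharf_prime hp.
Qed.

Lemma frob_comp (T : comNzRingType) n : [pchar T].-nat n ->
  forall P : {poly T}, exists Q, P ^+ n = Q \Po 'X^n.
Proof.
move=> hn; have hn' : [pchar {poly T}].-nat n by rewrite (eq_pnat _ (@pchar_poly T)).
have n0 : (0 < n)%N by case/andP: hn.
elim/poly_ind => [|P c [Q hQ]].
  by exists 0; rewrite comp_poly0 expr0n gtn_eqF.
exists (Q * 'X + (c ^+ n)%:P).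
rewrite exprDn_pchar // exprMn hQ comp_polyD comp_polyM comp_polyX comp_polyC.
by rewrite rmorphXn.
Qed.

Lemma frob_supp (T : comNzRingType) n (Q : {poly T}) i : (0 < n)%N ->
  (Q \Po 'X^n)`_i != 0 -> (n %| i)%N.
Proof. by move=> n0; rewrite coef_comp_poly_Xn //; case: ifP => //; rewrite eqxx. Qed.

Lemma no_sqrtm1 (F : finFieldType) p m : prime p -> (p %% 4 = 3)%N -> odd m ->
  #|F| = (p ^ m)%N -> forall y : F, y ^+ 2 != -1.
Proof.
move=> pp p4 om cF y; apply/eqP => hy.
have hp := card_finPcharP cF pp.
have h4 : ((p ^ m) %% 4 = 3)%N.
  rewrite -modnXm p4 -(odd_double_half m) om /= expnS -mul2n expnM /=.
  rewrite -modnMm -modnXm /= exp1n; by [].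
have e := expf_card y; rewrite cF (divn_eq (p ^ m) 4) h4 in e.
have y4 : y ^+ 4 = 1 by rewrite (_ : 4 = 2 * 2)%N // exprM hy sqrrN expr1n.
rewrite exprD mulnC exprM y4 expr1n mul1r (_ : 3 = 2 + 1)%N // exprD hy expr1 mulN1r in e.
have h2 : (2%:R : F) != 0.
  apply/eqP => h2; have : 2 \in [pchar F] by rewrite inE /= h2 eqxx.
  rewrite (pcharf_eq hp) inE => /eqP h; rewrite -h in p4; by [].
have : 2%:R * y = 0 by rewrite mulr2n mulrDl mul1r -{1}e addNr.
move/eqP; rewrite mulf_eq0 (negbTE h2) /= => /eqP y0.
by move: hy; rewrite y0 expr0n /= => /eqP; rewrite eq_sym oppr_eq0 oner_eq0.
Qed.
Lemma central_pow (R : comNzRingType) (th : {rmorphism R -> R}) n (P : {poly R}) :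
  [pchar R].-nat n -> (forall x, iter n th x = x) ->
  forall v, skew_mul th (P ^+ n) v = P ^+ n * v.
Proof.
move=> hn hth v; have n0 : (0 < n)%N by case/andP: hn.
have [Q ->] := frob_comp hn P.
apply: skew_mul_central => i /(frob_supp n0) /dvdnP [j ->].
have h1 : forall w, iter n (map_poly th) w = w.
  by move=> w; apply/polyP => l; rewrite coef_iter_map hth.
rewrite iterM; elim: j => [|j IH] //=; by rewrite IH h1.
Qed.

Lemma crt_comp_eq (R : comNzRingType) (g : {poly R}) (C D : {poly R} -> Prop) :
  (forall c, C c <-> D c) -> forall r, crt_comp g C r <-> crt_comp g D r.
Proof. by move=> E r; split=> -[c [hc ->]]; exists c; split=> //; apply/E. Qed.

Lemma main_generic (R : comNzRingType) (th : {rmorphism R -> R}) (N : nat)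
   (g1 g2 g3 t1 t2 t3 : {poly R}) :
  (0 < N)%N -> 'X^N + 1 = g1 * g2 * g3 ->
  g1 \is monic -> g2 \is monic -> g3 \is monic ->
  map_poly th g1 = g1 -> map_poly th g2 = g2 -> map_poly th g3 = g3 ->
  t1 * (g2 * g3) + t2 * (g1 * g3) + t3 * (g1 * g2) = 1 ->
  (forall v, skew_mul th (t1 * (g2 * g3)) v = t1 * (g2 * g3) * v) ->
  (forall v, skew_mul th (t2 * (g1 * g3)) v = t2 * (g1 * g3) * v) ->
  (forall v, skew_mul th (t3 * (g1 * g2)) v = t3 * (g1 * g2) * v) ->
  (forall x, iter (2 * N) th x = x) ->
      forall C : {poly R} -> Prop, skew_negacyclic th N C ->
        let C1 := crt_comp g1 C in
        let C2 := crt_comp g2 C in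
        let C3 := crt_comp g3 C in
        let D := euclid_dual N C in
        let D1 := crt_comp g1 D in
        let D2 := crt_comp g3 D in
        let D3 := crt_comp g2 D in
        [/\ skew_left_ideal th g1 C1 /\ skew_left_ideal th g2 C2
              /\ skew_left_ideal th g3 C3,
            forall c : {poly R}, (size c <= N)%N ->
              (C c <-> [/\ C1 (qmod c g1), C2 (qmod c g2) & C3 (qmod c g3)]),
            skew_left_ideal th g1 D1 /\ skew_left_ideal th g3 D2
              /\ skew_left_ideal th g2 D3,
            forall d : {poly R}, (size d <= N)%N ->
              (D d <-> [/\ D1 (qmod d g1), D2 (qmod d g3) & D3 (qmod d g2)]) &
            ((forall c : {poly R}, C c <-> D c) <->
             [/\ forall r : {poly R}, C1 r <-> D1 r,
                 forall r : {poly R}, C2 r <-> D3 r &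
                 forall r : {poly R}, C3 r <-> D2 r])].
Proof.
move=> N0 eG m1 m2 m3 f1 f2 f3 hs h1 h2 h3 hth C hC C1 C2 C3 D D1 D2 D3.
have mG := G_monic R N0; have sG := G_size R N0.
have hD : skew_left_ideal th ('X^N + 1) D by apply: dual_ideal.
have e1 : 'X^N + 1 = g1 * (g2 * g3) by rewrite eG mulrA.
have e2 : 'X^N + 1 = g2 * (g1 * g3) by rewrite eG; ring.
have e3 : 'X^N + 1 = g3 * (g1 * g2) by rewrite eG; ring.
have eG' : 'X^N + 1 = g1 * g3 * g2 by rewrite eG; ring.
have hs' : t1 * (g3 * g2) + t3 * (g1 * g2) + t2 * (g1 * g3) = 1.
  by apply: etrans hs; ring.
have h1' : forall v, skew_mul th (t1 * (g3 * g2)) v = t1 * (g3 * g2) * v.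
  by move=> v; rewrite [g3 * g2]mulrC h1.
have decC : forall c : {poly R}, (size c <= N)%N ->
    (C c <-> [/\ C1 (qmod c g1), C2 (qmod c g2) & C3 (qmod c g3)]).
  by move=> c hc; apply: (crt_iff (G := 'X^N + 1) (t1 := t1) (t2 := t2) (t3 := t3)) => //;
    rewrite sG ltnS.
have decD : forall d : {poly R}, (size d <= N)%N ->
    (D d <-> [/\ D1 (qmod d g1), D2 (qmod d g3) & D3 (qmod d g2)]).
  by move=> d hd; apply: (crt_iff (G := 'X^N + 1) (t1 := t1) (t2 := t3) (t3 := t2)) => //;
    rewrite sG ltnS.
have szC : forall c, C c -> (size c <= N)%N.
  by case: hC => hsz _ _ _ c /hsz; rewrite sG ltnS.
have szD : forall c, D c -> (size c <= N)%N by move=> c [].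
split.
- split; first exact: (comp_ideal e1).
  split; first exact: (comp_ideal e2).
  exact: (comp_ideal e3).
- exact: decC.
- split; first exact: (comp_ideal e1).
  split; first exact: (comp_ideal e3).
  exact: (comp_ideal e2).
- exact: decD.
split.
  by move=> E; split; apply: crt_comp_eq.
case=> E1 E2 E3 c; split.
  move=> Cc; have [a1 a2 a3] := (decC c (szC c Cc)).1 Cc.
  by apply/(decD c (szC c Cc)); split; [apply/E1 | apply/E3 | apply/E2].
move=> Dc; have [a1 a2 a3] := (decD c (szD c Dc)).1 Dc.
by apply/(decC c (szD c Dc)); split; [apply/E1 | apply/E2 | apply/E3].
Qed.
Lemma Fp_natM (T : nzRingType) (p : nat) (pp : prime p) (hp : p \in [pchar T]) (x y : 'F_p) :
  (((x * y)%R : 'F_p) : nat)%:R = (x : nat)%:R * (y : nat)%:R :> T.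
Proof.
have hq : (Zp_trunc (pdiv p)).+2 \in [pchar T] by rewrite Fp_cast.
by rewrite /= (GRing.natr_mod_pchar hq) natrM.
Qed.

Lemma Fp_natn (T : nzRingType) (p : nat) (pp : prime p) (hp : p \in [pchar T]) n :
  (((n%:R : 'F_p) : nat)%:R = n%:R :> T).
Proof. by rewrite val_Fp_nat // (GRing.natr_mod_pchar hp). Qed.

Lemma quad_size (R : nzRingType) (c : R) :
  ('X^2 + c *: 'X + 1 : {poly R}) \is monic /\ size ('X^2 + c *: 'X + 1 : {poly R}) = 3%N.
Proof.
have hs : (size (c *: 'X + 1 : {poly R})%R < size ('X^2 : {poly R})%R)%N.
  rewrite size_polyXn ltnS; apply: leq_trans (size_polyD _ _) _.
  by rewrite geq_max size_poly1 (leq_trans (size_scale_leq _ _)) ?size_polyX.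
rewrite -addrA; split.
  by rewrite monicE lead_coefDl // lead_coefXn.
by rewrite size_polyDl // size_polyXn.
Qed.

Lemma quad_irr (F : finFieldType) (k p m : nat) (c : Rk F k) : (0 < k)%N -> prime p ->
  (p %% 4 = 3)%N -> odd m -> #|F| = (p ^ m)%N ->
  (piR c = 0 \/ piR c ^+ 2 = 3) -> poly_irreducible ('X^2 + c *: 'X + 1).
Proof.
move=> k0 pp p4 om cF hc; have [mq sq] := quad_size c.
apply: (irr_pi k0) => // x; apply/negP => /rootP.
have E : map_poly (@piR F k) ('X^2 + c *: 'X + 1) = 'X^2 + (piR c) *: 'X + 1.
  apply/polyP => i; rewrite coef_map /= !coefD !coefZ !coefXn !coefX !coef1.
  by rewrite !rmorphD rmorphM /= !rmorph_nat.
rewrite E !hornerE => hx.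
have nsq := no_sqrtm1 pp p4 om cF.
case: hc => [h0|h3].
  rewrite h0 in hx; have e : x ^+ 2 = (x ^+ 2 + 0 * x + 1) - 1 by ring.
  by rewrite hx sub0r in e; move: (nsq x); rewrite e eqxx.
have e : (2 * x + piR c) ^+ 2 = 4 * (x ^+ 2 + piR c * x + 1) + (piR c ^+ 2 - 4) by ring.
rewrite hx h3 mulr0 add0r (_ : 3 - 4 = -1 :> F) in e; last by ring.
by move: (nsq (2 * x + piR c)); rewrite e eqxx.
Unshelve. all: exact: k0.
Qed.

Unset Implicit Arguments.

Theorem mainTheorem15 (p m s k : nat) (F : finFieldType)
    (Theta : {rmorphism Rk F k -> Rk F k}) (beta : 'F_p) :
  prime p -> (p %% 12 = 11)%N -> odd m -> (0 < k)%N -> #|F| = (p ^ m)%N ->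
  bijective Theta -> (forall a, iter (p ^ s)%N Theta a = a) ->
  beta ^+ 2 = 3 ->
  let b : Rk F k := (beta : nat)%:R in
  let f1 : {poly Rk F k} := 'X^2 + 1 in
  let f2 : {poly Rk F k} := 'X^2 + b *: 'X + 1 in
  let f3 : {poly Rk F k} := 'X^2 - b *: 'X + 1 in
  let N := (6 * p ^ s)%N in
  let g1 := f1 ^+ (p ^ s)%N in
  let g2 := f2 ^+ (p ^ s)%N in
  let g3 := f3 ^+ (p ^ s)%N in
  [/\ poly_irreducible f1, poly_irreducible f2, poly_irreducible f3,
      'X^N + 1 = g1 * g2 * g3 &
      forall C : {poly Rk F k} -> Prop, skew_negacyclic Theta N C ->
        let C1 := crt_comp g1 C in
        let C2 := crt_comp g2 C in
        let C3 := crt_comp g3 C in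
        let D := euclid_dual N C in
        let D1 := crt_comp g1 D in
        let D2 := crt_comp g3 D in
        let D3 := crt_comp g2 D in
        [/\ skew_left_ideal Theta g1 C1 /\ skew_left_ideal Theta g2 C2
              /\ skew_left_ideal Theta g3 C3,
            forall c : {poly Rk F k}, (size c <= N)%N ->
              (C c <-> [/\ C1 (qmod c g1), C2 (qmod c g2) & C3 (qmod c g3)]),
            skew_left_ideal Theta g1 D1 /\ skew_left_ideal Theta g3 D2
              /\ skew_left_ideal Theta g2 D3,
            forall d : {poly Rk F k}, (size d <= N)%N ->
              (D d <-> [/\ D1 (qmod d g1), D2 (qmod d g3) & D3 (qmod d g2)]) &
            ((forall c : {poly Rk F k}, C c <-> D c) <->
             [/\ forall r : {poly Rk F k}, C1 r <-> D1 r,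
                 forall r : {poly Rk F k}, C2 r <-> D3 r &
                 forall r : {poly Rk F k}, C3 r <-> D2 r])]].
Proof.
move=> pp p12 om k0 cF bijT hT hb b f1 f2 f3 N g1 g2 g3.
have hpF := card_finPcharP cF pp.
have hpR : p \in [pchar Rk F k] by rewrite pchar_qpoly.
have hpP : p \in [pchar {poly Rk F k}] by rewrite pchar_poly.
have p4 : (p %% 4 = 3)%N by lia.
have p6 : (6 < p)%N by lia.
have fr : forall x y : {poly Rk F k}, (x + y) ^+ (p ^ s) = x ^+ (p ^ s) + y ^+ (p ^ s).
  by move=> x y; apply: exprDn_pchar; apply: pchar_nat.
have bb : b ^+ 2 = 3.
  by rewrite expr2 /b -(Fp_natM pp hpR) -expr2 hb (Fp_natn pp hpR).
have thb : Theta b = b by rewrite rmorph_nat.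
have [i6 h6] : exists i6 : Rk F k, 6 * i6 = 1.
  have h60 : (6%:R : 'F_p) != 0.
    apply/eqP => h; have := congr1 (@nat_of_ord _) h; rewrite val_Fp_nat // modn_small //.
  exists (((6%:R : 'F_p)^-1 : 'F_p) : nat)%:R.
  by rewrite -(Fp_natn pp hpR 6) -(Fp_natM pp hpR) mulfV.
set B : {poly Rk F k} := b%:P.
have hbX : b *: 'X = B * 'X by rewrite mul_polyC.
have hB : (3 : {poly Rk F k}) - B ^+ 2 = 0.
  rewrite -rmorphXn bb; apply/eqP; rewrite subr_eq0; apply/eqP.
  by apply/polyP => i; rewrite coefC coefMn coef1; case: (i == 0%N); rewrite ?mul0rn.
have f123 : f1 * f2 * f3 = 'X^6 + 1.
  rewrite /f1 /f2 /f3 hbX.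
  transitivity ('X^6 + 1 + (3 - B ^+ 2) * ('X^4 + 'X^2)); first ring.
  by rewrite hB mul0r addr0.
have fact : 'X^N + 1 = g1 * g2 * g3.
  by rewrite /g1 /g2 /g3 -!exprMn f123 fr expr1n -exprM.
have pR3 : piR b ^+ 2 = 3 by rewrite -rmorphXn bb rmorph_nat.
have ef1 : f1 = 'X^2 + 0 *: 'X + 1 by rewrite scale0r addr0.
have ef3 : f3 = 'X^2 + (- b) *: 'X + 1 by rewrite scaleNr.
have irr1 : poly_irreducible f1.
  by rewrite ef1; apply: (quad_irr k0 pp p4 om cF); left; rewrite rmorph0.
have irr2 : poly_irreducible f2.
  by apply: (quad_irr k0 pp p4 om cF); right.
have irr3 : poly_irreducible f3.
  by rewrite ef3; apply: (quad_irr k0 pp p4 om cF); right; rewrite rmorphN sqrrN.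
split => //.
have N0 : (0 < N)%N by rewrite /N muln_gt0 /= expn_gt0 (prime_gt0 pp).
have mf1 : f1 \is monic by rewrite ef1; exact: (quad_size _).1.
have mf2 : f2 \is monic by exact: (quad_size _).1.
have mf3 : f3 \is monic by rewrite ef3; exact: (quad_size _).1.
have mq : forall c : Rk F k, Theta c = c ->
    map_poly Theta ('X^2 + c *: 'X + 1) = 'X^2 + c *: 'X + 1.
  move=> c hc; apply/polyP => i.
  by rewrite coef_map /= !coefD !coefZ !coefXn !coefX !coef1 !rmorphD rmorphM /= !rmorph_nat hc.
have th1 : map_poly Theta g1 = g1.
  by rewrite /g1 rmorphXn /= ef1 mq // rmorph0.
have th2 : map_poly Theta g2 = g2 by rewrite /g2 rmorphXn /= mq.
have th3 : map_poly Theta g3 = g3.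
  by rewrite /g3 rmorphXn /= ef3 mq // rmorphN thb.
set T1 : {poly Rk F k} := 2 * i6%:P.
set T2 : {poly Rk F k} := i6%:P * (B * 'X + 2).
set T3 : {poly Rk F k} := i6%:P * (2 - B * 'X).
have h6P : i6%:P * 6 = 1 :> {poly Rk F k}.
  apply/polyP => i; rewrite coefCM coefMn coef1.
  by case: (i == 0%N); rewrite ?mul0rn ?mulr0 // mulrC.
have hsum0 : T1 * (f2 * f3) + T2 * (f1 * f3) + T3 * (f1 * f2) = 1.
  rewrite /T1 /T2 /T3 /f1 /f2 /f3 hbX.
  transitivity (i6%:P * 6 + i6%:P * (3 - B ^+ 2) * (2 * 'X^4 + 4 * 'X^2)); first ring.
  by rewrite hB mulr0 mul0r addr0.
have hsum : T1 ^+ (p ^ s) * (g2 * g3) + T2 ^+ (p ^ s) * (g1 * g3) + T3 ^+ (p ^ s) * (g1 * g2) = 1.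
  by rewrite /g1 /g2 /g3 -!exprMn -!fr hsum0 expr1n.
have hn := pchar_nat s hpR.
have hth : forall x, iter (2 * N) Theta x = x.
  move=> x; rewrite /N mulnA iterM; elim: (2 * 6)%N => [|j IH] //=.
  by rewrite IH hT.
apply: (main_generic (t1 := T1 ^+ (p ^ s)) (t2 := T2 ^+ (p ^ s)) (t3 := T3 ^+ (p ^ s))) => //.
- by rewrite /g1 /g2 /g3; apply: monic_exp.
- by rewrite /g1 /g2 /g3; apply: monic_exp.
- by rewrite /g1 /g2 /g3; apply: monic_exp.
- by move=> v; rewrite /g2 /g3 -!exprMn; apply: central_pow.
- by move=> v; rewrite /g1 /g3 -!exprMn; apply: central_pow.
- by move=> v; rewrite /g1 /g2 -!exprMn; apply: central_pow.
Qed.
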